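(* For $\lambda>0$ and $c>0$, let $V\sim\mathrm{Exp}(\lambda)$, let $V_1,V_2$ be independent copies of $V$, $V_{(1:2)}=\min(V_1,V_2)$, $V_{(2:2)}=\max(V_1,V_2)$, and for $p_0\ge0$, $r\in[0,1]$ define the creator's expected profit $P(p_0,r)=R(p_0,r)-c$, where $$R(p_0,r)=\begin{cases}2p_0+2r\,\mathbb{E}[V] & \text{if } p_0\le (1-r)\mathbb{E}[V_{(1:2)}],\\ p_0+r\,\mathbb{E}[V_{(2:2)}]+p_0\Pr[V_{(1:2)}>p_0] & \text{if } (1-r)\mathbb{E}[V_{(1:2)}]<p_0\le(1-r)\mathbb{E}[V_{(2:2)}],\\ 2p_0\Pr[V>p_0] & \text{if } p_0>(1-r)\mathbb{E}[V_{(2:2)}].\end{cases}$$ Let $u_c^*=\sup_{p_0\ge0,r\in[0,1]}P(p_0,r)$ and $u_{c,r=0}^*=\sup_{p_0\ge0}P(p_0,0)$. Then the set $\mathbb{T}=\{(\lambda,c):\ u_c^*\ge0,\ u_{c,r=0}^*<0,\ \lambda>0,\ c>0\}$ is non-empty.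
   Context: $R$ is the expected revenue of a creator selling a two-unit NFT collection at common mint price $p_0$ with royalty rate $r$ in the presence of a risk-neutral speculator who buys 2, 1 or 0 units in the three price regions respectively; $c$ is the creator's cost. Trade occurs iff the optimal profit is nonnegative. *)

(* Defs.v *)
From Stdlib Require Import Reals.
From Coquelicot Require Import Coquelicot.
Open Scope R_scope.

Definition exp_density (lam v : R) : R := if Rlt_dec v 0 then 0 else lam * exp (- lam * v).

Definition RInt_R (f : R -> R) : R :=
  RInt_gen f (Rbar_locally m_infty) (Rbar_locally p_infty).

Definition E1 (lam : R) (g : R -> R) : R :=
  RInt_R (fun v => g v * exp_density lam v).

Definition E2 (lam : R) (g : R -> R -> R) : R :=
  RInt_R (fun v1 => RInt_R (fun v2 => g v1 v2 * exp_density lam v1 * exp_density lam v2)).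


Definition EV (lam : R) : R := E1 lam (fun v => v).
Definition EVmin (lam : R) : R := E2 lam (fun v1 v2 => Rmin v1 v2).
Definition EVmax (lam : R) : R := E2 lam (fun v1 v2 => Rmax v1 v2).
Definition PrV_gt (lam p : R) : R := E1 lam (fun v => if Rlt_dec p v then 1 else 0).
Definition PrVmin_gt (lam p : R) : R :=
  E2 lam (fun v1 v2 => if Rlt_dec p (Rmin v1 v2) then 1 else 0).

Definition Rev (lam p0 r : R) : R :=
  if Rle_dec p0 ((1 - r) * EVmin lam) then 2 * p0 + 2 * r * EV lam
  else if Rle_dec p0 ((1 - r) * EVmax lam) then
    p0 + r * EVmax lam + p0 * PrVmin_gt lam p0
  else 2 * p0 * PrV_gt lam p0.

Definition Profit (lam c p0 r : R) : R := Rev lam p0 r - c.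

Definition u_star (lam c : R) : Rbar :=
  Lub_Rbar (fun x => exists p0 r, 0 <= p0 /\ 0 <= r <= 1 /\ x = Profit lam c p0 r).

Definition u_star_r0 (lam c : R) : Rbar :=
  Lub_Rbar (fun x => exists p0, 0 <= p0 /\ x = Profit lam c p0 0).

(* Main.v *)
Require Import Defs.
From Stdlib Require Import Reals Lra.
From Coquelicot Require Import Coquelicot.
Open Scope R_scope.

Lemma lim_neg (f : R -> R) L : is_lim f m_infty L -> is_lim (fun x => f (- x)) p_infty L.
Proof.
  intros H. eapply is_lim_comp; [exact H| |].
  - apply (is_lim_opp (fun y => y) p_infty p_infty). apply is_lim_id.
  - simpl. exists 0. intros; discriminate.
Qed.

Lemma LE : is_lim (fun x => exp (- x)) p_infty 0.
Proof. apply (lim_neg exp). apply is_lim_exp_m. Qed.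

Lemma LXE : is_lim (fun x => x * exp (- x)) p_infty 0.
Proof.
  apply (is_lim_ext (fun x => - ((- x) * exp (- x)))).
  { intros; ring. }
  replace (Finite 0) with (Rbar_opp 0) by (simpl; f_equal; ring).
  apply is_lim_opp. apply (lim_neg (fun y => y * exp y)). apply is_lim_mul_exp_m.
Qed.

Lemma lim_sc c f : is_lim f p_infty 0 -> is_lim (fun x => c * f x) p_infty 0.
Proof.
  intros H. replace (Finite 0) with (Rbar_mult c 0) by (simpl; f_equal; ring).
  apply is_lim_mult; [apply is_lim_const | exact H | simpl; auto].
Qed.

Lemma lim_add f g : is_lim f p_infty 0 -> is_lim g p_infty 0 -> is_lim (fun x => f x + g x) p_infty 0.
Proof.
  intros H1 H2. replace (Finite 0) with (Finite (0 + 0)) by (f_equal; ring).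
  apply is_lim_plus'; auto.
Qed.

Lemma LEE : is_lim (fun x => exp (- x) * exp (- x)) p_infty 0.
Proof.
  replace (Finite 0) with (Rbar_mult 0 0) by (simpl; f_equal; ring).
  apply is_lim_mult; [apply LE | apply LE | simpl; auto].
Qed.

Lemma gen_FTC {Fa Fb : (R -> Prop) -> Prop} {FFa : Filter Fa} {FFb : Filter Fb}
  (f g F : R -> R) la lb :
  (forall x, is_derive F x (g x)) -> (forall x, continuous g x) ->
  filter_prod Fa Fb (fun ab => forall x, Rmin (fst ab) (snd ab) < x < Rmax (fst ab) (snd ab) -> g x = f x) ->
  filterlim F Fa (locally la) -> filterlim F Fb (locally lb) ->
  is_RInt_gen f Fa Fb (lb - la).
Proof.
  intros Hd Hc He Ha Hb.
  apply is_RInt_gen_ext with g; auto.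
  apply is_RInt_gen_ext with (Derive F).
  { apply filter_forall. intros ab x _. apply is_derive_unique; auto. }
  apply is_RInt_gen_Derive; auto.
  - apply filter_forall. intros ab x _. exists (g x); auto.
  - apply filter_forall. intros ab x _. apply continuous_ext with g; auto.
    intros y; symmetry; apply is_derive_unique; auto.
Qed.

Lemma lim_at_point (F : R -> R) a : filterlim F (at_point a) (locally (F a)).
Proof. intros P HP. unfold filtermap, at_point. apply locally_singleton; auto. Qed.

Lemma zero_left f a : (forall x, x < a -> f x = 0) ->
  is_RInt_gen f (Rbar_locally m_infty) (at_point a) 0.
Proof.
  intros H. cut (is_RInt_gen f (Rbar_locally m_infty) (at_point a) (0 - 0)).
  { now rewrite Rminus_0_r. }
  apply gen_FTC with (g := fun _ => 0) (F := fun _ => 0).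
  - intros x. auto_derive; auto.
  - intros; apply continuous_const.
  - apply Filter_prod with (fun x => x < a) (fun x => x = a).
    + exists a; auto.
    + reflexivity.
    + intros u v Hu Hv x Hx. simpl in Hx. subst v.
      rewrite Rmin_left in Hx by lra. rewrite Rmax_right in Hx by lra.
      symmetry; apply H; lra.
  - apply filterlim_const.
  - apply filterlim_const.
Qed.

Lemma tail f g F a (L : R) : (forall x, is_derive F x (g x)) -> (forall x, continuous g x) ->
  (forall x, a < x -> f x = g x) -> is_lim F p_infty L ->
  is_RInt_gen f (at_point a) (Rbar_locally p_infty) (L - F a).
Proof.
  intros Hd Hc He Hl.
  apply gen_FTC with g F; auto.
  - apply Filter_prod with (fun x => x = a) (fun x => a < x).
    + reflexivity.
    + exists a; auto.
    + intros u v Hu Hv x Hx. simpl in Hx. subst u.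
      rewrite Rmin_left in Hx by lra. rewrite Rmax_right in Hx by lra.
      symmetry; apply He; lra.
  - apply lim_at_point.
Qed.

Lemma seg f g F a b : a <= b -> (forall x, is_derive F x (g x)) -> (forall x, continuous g x) ->
  (forall x, a < x < b -> f x = g x) -> is_RInt f a b (F b - F a).
Proof.
  intros Hab Hd Hc He.
  apply is_RInt_ext with g.
  { intros x Hx. rewrite Rmin_left in Hx by lra. rewrite Rmax_right in Hx by lra.
    symmetry; apply He; lra. }
  apply (is_RInt_derive F g); auto.
Qed.

Lemma full_at a f g F (L : R) : (forall x, x < a -> f x = 0) ->
  (forall x, is_derive F x (g x)) -> (forall x, continuous g x) ->
  (forall x, a < x -> f x = g x) -> is_lim F p_infty L ->
  RInt_R f = L - F a.
Proof.
  intros H0 Hd Hc He Hl. unfold RInt_R. apply is_RInt_gen_unique.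
  replace (L - F a) with (plus 0 (L - F a)) by (unfold plus; simpl; ring).
  apply (is_RInt_gen_Chasles (V:=R_NormedModule) f a 0 (L - F a)).
  - apply zero_left; auto.
  - apply tail with g; auto.
Qed.

Lemma two_piece a b f g1 F1 g2 F2 (L : R) : a <= b -> (forall x, x < a -> f x = 0) ->
  (forall x, is_derive F1 x (g1 x)) -> (forall x, continuous g1 x) ->
  (forall x, is_derive F2 x (g2 x)) -> (forall x, continuous g2 x) ->
  (forall x, a < x < b -> f x = g1 x) -> (forall x, b < x -> f x = g2 x) ->
  is_lim F2 p_infty L ->
  RInt_R f = (F1 b - F1 a) + (L - F2 b).
Proof.
  intros Hab H0 Hd1 Hc1 Hd2 Hc2 He1 He2 Hl. unfold RInt_R. apply is_RInt_gen_unique.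
  replace ((F1 b - F1 a) + (L - F2 b)) with (plus 0 (plus (F1 b - F1 a) (L - F2 b)))
    by (unfold plus; simpl; ring).
  apply (is_RInt_gen_Chasles (V:=R_NormedModule) f a 0).
  - apply zero_left; auto.
  - apply (is_RInt_gen_Chasles (V:=R_NormedModule) f b).
    + apply is_RInt_gen_at_point. apply seg with g1; auto.
    + apply tail with g2; auto.
Qed.

Lemma d_pos v : 0 <= v -> exp_density 1 v = exp (- v).
Proof. intros H. unfold exp_density. destruct Rlt_dec; [lra|]. rewrite Rmult_1_l. f_equal. ring. Qed.
Lemma d_neg v : v < 0 -> exp_density 1 v = 0.
Proof. intros H. unfold exp_density. destruct Rlt_dec; lra. Qed.

Ltac dtac := intros ?; auto_derive; [auto | field].
Ltac ctac := intros ?; apply ex_derive_continuous; auto_derive; auto.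

Lemma EV1 : EV 1 = 1.
Proof.
  unfold EV, Defs.E1.
  rewrite (full_at 0 _ (fun x => x * exp (- x)) (fun x => -1 * (x * exp (- x)) + -1 * exp (- x)) 0).
  - replace (-0) with 0 by ring. rewrite exp_0. ring.
  - intros x Hx. rewrite d_neg; auto; ring.
  - dtac.
  - ctac.
  - intros x Hx. rewrite d_pos; lra.
  - apply lim_add; apply lim_sc; [apply LXE | apply LE].
Qed.

Lemma zero_int f : (forall x, f x = 0) -> RInt_R f = 0.
Proof.
  intros H. rewrite (full_at 0 f (fun _ => 0) (fun _ => 0) 0); auto.
  - ring.
  - intros x. auto_derive; auto.
  - intros; apply continuous_const.
  - apply is_lim_const.
Qed.

Lemma inner_min v1 : 0 <= v1 ->
  RInt_R (fun v2 => Rmin v1 v2 * exp_density 1 v1 * exp_density 1 v2)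
  = exp (- v1) - exp (- v1) * exp (- v1).
Proof.
  intros H.
  rewrite (two_piece 0 v1 _ (fun x => exp (- v1) * (x * exp (- x)))
     (fun x => exp (- v1) * (-1 * (x * exp (- x)) + -1 * exp (- x)))
     (fun x => v1 * exp (- v1) * exp (- x)) (fun x => - (v1 * exp (- v1)) * exp (- x)) 0); auto.
  - replace (-0) with 0 by ring. rewrite exp_0. ring.
  - intros x Hx. rewrite (d_neg x); auto; ring.
  - dtac.
  - ctac.
  - dtac.
  - ctac.
  - intros x Hx. rewrite Rmin_right by lra. rewrite !d_pos by lra. ring.
  - intros x Hx. rewrite Rmin_left by lra. rewrite !d_pos by lra. ring.
  - apply lim_sc, LE.
Qed.

Lemma EVmin1 : EVmin 1 = 1/2.
Proof.
  unfold EVmin, Defs.E2.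
  rewrite (full_at 0 _ (fun x => exp (- x) + -1 * (exp (- x) * exp (- x)))
    (fun x => -1 * exp (- x) + (1/2) * (exp (- x) * exp (- x))) 0).
  - replace (-0) with 0 by ring. rewrite exp_0. field.
  - intros x Hx. apply zero_int. intros y. rewrite (d_neg x); auto; ring.
  - dtac.
  - ctac.
  - intros x Hx. rewrite inner_min by lra. ring.
  - apply lim_add; apply lim_sc; [apply LE | apply LEE].
Qed.

Lemma inner_max v1 : 0 <= v1 ->
  RInt_R (fun v2 => Rmax v1 v2 * exp_density 1 v1 * exp_density 1 v2)
  = v1 * exp (- v1) + exp (- v1) * exp (- v1).
Proof.
  intros H.
  rewrite (two_piece 0 v1 _ (fun x => v1 * exp (- v1) * exp (- x)) (fun x => - (v1 * exp (- v1)) * exp (- x))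
     (fun x => exp (- v1) * (x * exp (- x)))
     (fun x => exp (- v1) * (-1 * (x * exp (- x)) + -1 * exp (- x))) 0); auto.
  - replace (-0) with 0 by ring. rewrite exp_0. ring.
  - intros x Hx. rewrite (d_neg x); auto; ring.
  - dtac.
  - ctac.
  - dtac.
  - ctac.
  - intros x Hx. rewrite Rmax_left by lra. rewrite !d_pos by lra. ring.
  - intros x Hx. rewrite Rmax_right by lra. rewrite !d_pos by lra. ring.
  - apply lim_sc. apply (is_lim_ext (fun x => -1 * (x * exp (- x)) + -1 * exp (- x))).
    { intros; ring. }
    apply lim_add; apply lim_sc; [apply LXE | apply LE].
Qed.

Lemma EVmax1 : EVmax 1 = 3/2.
Proof.
  unfold EVmax, Defs.E2.
  rewrite (full_at 0 _ (fun x => x * exp (- x) + exp (- x) * exp (- x))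
    (fun x => -1 * (x * exp (- x)) + (-1 * exp (- x) + (-1/2) * (exp (- x) * exp (- x)))) 0).
  - replace (-0) with 0 by ring. rewrite exp_0. field.
  - intros x Hx. apply zero_int. intros y. rewrite (d_neg x); auto; ring.
  - dtac.
  - ctac.
  - intros x Hx. rewrite inner_max by lra. ring.
  - apply lim_add; [apply lim_sc, LXE|]. apply lim_add; [apply lim_sc, LE|].
    apply lim_sc, LEE.
Qed.

Lemma PrV1 p : 0 <= p -> PrV_gt 1 p = exp (- p).
Proof.
  intros Hp. unfold PrV_gt, Defs.E1.
  rewrite (full_at p _ (fun x => exp (- x)) (fun x => -1 * exp (- x)) 0).
  - ring.
  - intros x Hx. destruct Rlt_dec; [lra|]. ring.
  - dtac.
  - ctac.
  - intros x Hx. destruct Rlt_dec; [|lra]. rewrite d_pos by lra. ring.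
  - apply lim_sc, LE.
Qed.

Lemma inner_pm p v1 : 0 <= p ->
  RInt_R (fun v2 => (if Rlt_dec p (Rmin v1 v2) then 1 else 0) * exp_density 1 v1 * exp_density 1 v2)
  = if Rle_dec v1 p then 0 else exp (- v1) * exp (- p).
Proof.
  intros Hp. destruct (Rle_dec v1 p) as [Hv|Hv].
  - apply zero_int. intros y. destruct Rlt_dec as [h|h]; [|ring].
    exfalso. pose proof (Rmin_l v1 y). lra.
  - rewrite (full_at p _ (fun x => exp (- v1) * exp (- x)) (fun x => - exp (- v1) * exp (- x)) 0).
    + ring.
    + intros x Hx. destruct Rlt_dec as [h|h]; [|ring].
      exfalso. pose proof (Rmin_r v1 x). lra.
    + dtac.
    + ctac.
    + intros x Hx. destruct Rlt_dec as [h|h].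
      * rewrite !d_pos by lra. ring.
      * exfalso. apply h. unfold Rmin. destruct Rle_dec; lra.
    + apply lim_sc, LE.
Qed.

Lemma PrVmin1 p : 0 <= p -> PrVmin_gt 1 p = exp (- p) * exp (- p).
Proof.
  intros Hp. unfold PrVmin_gt, Defs.E2.
  rewrite (full_at p _ (fun x => exp (- p) * exp (- x)) (fun x => - exp (- p) * exp (- x)) 0).
  - ring.
  - intros x Hx. rewrite inner_pm by lra. destruct Rle_dec; [auto|lra].
  - dtac.
  - ctac.
  - intros x Hx. rewrite inner_pm by lra. destruct Rle_dec; [lra|]. ring.
  - apply lim_sc, LE.
Qed.

Lemma exp_le' x y : x <= y -> exp x <= exp y.
Proof. intros H. destruct (Req_dec x y). subst; lra. left; apply exp_increasing; lra. Qed.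

Lemma em1 : exp (-1) < 1/2.
Proof.
  replace (-1) with (- (1)) by ring. rewrite exp_Ropp. pose proof (exp_ineq1 1 ltac:(lra)).
  apply (Rmult_lt_reg_l (exp 1)); [lra|]. rewrite Rinv_r; lra.
Qed.

Lemma rev_bound p0 : 0 <= p0 -> Rev 1 p0 0 <= 15/8.
Proof.
  intros Hp. unfold Rev. rewrite EVmin1, EVmax1, EV1.
  pose proof em1 as He1. pose proof (exp_pos (-1)).
  destruct Rle_dec as [h1|h1]; [lra|].
  destruct Rle_dec as [h2|h2].
  - rewrite PrVmin1 by lra. rewrite <- exp_plus.
    destruct (Rle_dec p0 1) as [h3|h3].
    + assert (exp (- p0 + - p0) <= exp (-1)) by (apply exp_le'; lra).
      pose proof (exp_pos (- p0 + - p0)).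
      assert (p0 * exp (- p0 + - p0) <= 1 * exp (- p0 + - p0)) by (apply Rmult_le_compat_r; lra).
      lra.
    + assert (exp (- p0 + - p0) <= exp (-1 + -1)) by (apply exp_le'; lra).
      rewrite (exp_plus (-1) (-1)) in H0.
      pose proof (exp_pos (- p0 + - p0)).
      assert (p0 <= 3/2) by lra.
      assert (p0 * exp (- p0 + - p0) <= 3/2 * exp (- p0 + - p0)) by (apply Rmult_le_compat_r; lra).
      assert (exp (-1) * exp (-1) <= 1/2 * 1/2) by nra.
      lra.
  - assert (Hq : 2 * p0 <= exp p0).
    { replace p0 with (p0/2 + p0/2) at 2 by field. rewrite exp_plus.
      pose proof (exp_ineq1 (p0/2) ltac:(lra)).
      assert ((1 + p0/2) * (1 + p0/2) <= exp (p0/2) * exp (p0/2)) by (apply Rmult_le_compat; lra).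
      assert (0 <= (1 - p0/2) * (1 - p0/2)) by (apply Rle_0_sqr). replace (2*p0) with ((1+p0/2)*(1+p0/2) - (1-p0/2)*(1-p0/2)) by field. lra. }
    rewrite PrV1 by lra. rewrite exp_Ropp.
    pose proof (exp_pos p0).
    assert (2 * p0 * / exp p0 <= 1).
    { apply (Rmult_le_reg_r (exp p0)); [lra|]. rewrite Rmult_assoc, Rinv_l; lra. }
    lra.
Qed.

Theorem corollary6 :
  exists lam c : R,
    Rbar_le (Finite 0) (u_star lam c) /\ Rbar_lt (u_star_r0 lam c) (Finite 0) /\
    0 < lam /\ 0 < c.
Proof.
  exists 1, 2. split; [|split; [|lra]].
  - unfold u_star. destruct (Lub_Rbar_correct (fun x => exists p0 r, 0 <= p0 /\ 0 <= r <= 1 /\ x = Profit 1 2 p0 r)) as [H _].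
    apply H. exists 0, 1. split; [lra|split; [lra|]].
    unfold Profit, Rev. rewrite EV1. destruct Rle_dec; [ring|].
    exfalso; apply n; lra.
  - unfold u_star_r0. destruct (Lub_Rbar_correct (fun x => exists p0, 0 <= p0 /\ x = Profit 1 2 p0 0)) as [_ H].
    assert (Hl : Rbar_le (Lub_Rbar (fun x => exists p0, 0 <= p0 /\ x = Profit 1 2 p0 0)) (Finite (-1/8))).
    { apply H. intros x [p0 [Hp ->]]. simpl. unfold Profit. pose proof (rev_bound p0 Hp). lra. }
    destruct (Lub_Rbar _) as [l| |]; simpl in *; auto; lra.
Qed.
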